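(* Let $K$ be a field, $\mathcal A$ a $K$-algebra, $\vartheta$ any one of the four types (left, right, pre-two-sided, two-sided), $M$ a $\vartheta$-Mathieu subspace of $\mathcal A$, and $a\in\mathcal A$ algebraic over $K$. Then $a\in\sqrt M$ if and only if $(a^N)_\vartheta\subseteq M$ for some integer $N\ge 0$.
   Context: All algebras are associative and unital. For a subset $S\subseteq\mathcal A$, $\sqrt S$ is the set of $a\in\mathcal A$ with $a^m\in S$ for all sufficiently large $m$. Let $M$ be a $K$-subspace of $\mathcal A$. $M$ is a left (resp. right) Mathieu subspace if whenever $a\in\mathcal A$ satisfies $a^m\in M$ for all $m\ge1$, then for every $b\in\mathcal A$ there is $N$ with $ba^m\in M$ (resp. $a^mb\in M$) for all $m\ge N$; pre-two-sided if it is both left and right; two-sided if whenever $a^m\in M$ for all $m\ge1$, for all $b,c\in\mathcal A$ there is $N$ with $ba^mc\in M$ for all $m\ge N$. For $x\in\mathcal A$: $(x)_\vartheta$ is $\mathcal Ax$ if $\vartheta$ = left, $x\mathcal A$ if $\vartheta$ = right, the two-sided ideal generated by $x$ if $\vartheta$ = two-sided, and $x\mathcal A+\mathcal Ax$ if $\vartheta$ = pre-two-sided. *)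

(* Defs.v *)
From HB Require Import structures.
From mathcomp Require Import all_boot all_order all_algebra.
Set Implicit Arguments. Unset Strict Implicit. Unset Printing Implicit Defensive.
Import Order.TTheory GRing.Theory Num.Theory.
Local Open Scope ring_scope.

Inductive mtype := MLeft | MRight | MPreTwo | MTwo.

Section Defs.
Variables (K : fieldType) (A : algType K).

Definition is_subspace (M : {pred A}) : Prop :=
  0 \in M /\ forall (k : K) (u v : A), u \in M -> v \in M -> k *: u + v \in M.

Definition algebraic_over (a : A) : Prop :=
  exists p : {poly K}, p != 0 /\ horner_alg a p = 0.

Definition in_radical (M : {pred A}) (a : A) : Prop :=
  exists N : nat, forall m : nat, (N <= m)%N -> a ^+ m \in M.

Definition all_powers_in (M : {pred A}) (a : A) : Prop :=
  forall m : nat, (1 <= m)%N -> a ^+ m \in M.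

Definition left_mathieu (M : {pred A}) : Prop :=
  forall a : A, all_powers_in M a ->
  forall b : A, exists N : nat, forall m : nat, (N <= m)%N -> b * a ^+ m \in M.

Definition right_mathieu (M : {pred A}) : Prop :=
  forall a : A, all_powers_in M a ->
  forall b : A, exists N : nat, forall m : nat, (N <= m)%N -> a ^+ m * b \in M.

Definition two_sided_mathieu (M : {pred A}) : Prop :=
  forall a : A, all_powers_in M a ->
  forall b c : A, exists N : nat, forall m : nat, (N <= m)%N -> b * a ^+ m * c \in M.

Definition mathieu (t : mtype) (M : {pred A}) : Prop :=
  match t with
  | MLeft => left_mathieu M
  | MRight => right_mathieu M
  | MPreTwo => left_mathieu M /\ right_mathieu M
  | MTwo => two_sided_mathieu M
  end.

Definition in_gen (t : mtype) (x y : A) : Prop :=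
  match t with
  | MLeft => exists b : A, y = b * x
  | MRight => exists b : A, y = x * b
  | MPreTwo => exists b c : A, y = x * b + c * x
  | MTwo => exists s : seq (A * A), y = \sum_(q <- s) q.1 * x * q.2
  end.

End Defs.

(* Main.v *)
Require Import Defs.
From HB Require Import structures.
From mathcomp Require Import all_boot all_order all_algebra.
From mathcomp Require Import ring.
Import GRing.Theory.
Local Open Scope ring_scope.

Section Aux.
Variables (K : fieldType) (A : algType K) (M : {pred A}) (a : A).
Hypothesis HM : is_subspace M.

Lemma addM u v : u \in M -> v \in M -> u + v \in M.
Proof. by move=> hu hv; have := HM.2 1 u v hu hv; rewrite scale1r. Qed.

Lemma sumM (I : Type) (s : seq I) (F : I -> A) :
  (forall i, F i \in M) -> \sum_(i <- s) F i \in M.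
Proof.
move=> hF; elim: s => [|x s IH]; first by rewrite big_nil; exact: HM.1.
by rewrite big_cons; apply: addM.
Qed.

Lemma poly_memM (w : {poly K}) : forall n,
  (forall j, (n <= j)%N -> a ^+ j \in M) -> horner_alg a (w * 'X^n) \in M.
Proof.
have hC : forall (c : K) (x : {poly K}), horner_alg a (c%:P * x) = c *: horner_alg a x.
  by move=> c x; rewrite rmorphM /= horner_algC mulr_algl.
have hXn : forall n, horner_alg a 'X^n = a ^+ n.
  by move=> k; rewrite rmorphXn /= horner_algX.
elim/poly_ind: w => [|w c IH] n hn; first by rewrite mul0r rmorph0; exact: HM.1.
rewrite mulrDl -mulrA -exprS rmorphD /=.
have h1 := IH n.+1 (fun j hj => hn j (ltnW hj)).
rewrite addrC hC hXn.
by apply: HM.2 => //; apply: hn.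
Qed.

End Aux.

Theorem theorem3p10 (K : fieldType) (A : algType K) (t : mtype) (M : {pred A})
  (HM : is_subspace M) (Hmath : mathieu t M) (a : A) (Halg : algebraic_over a) :
  in_radical M a <->
  exists N : nat, forall y : A, in_gen t (a ^+ N) y -> y \in M.
Proof.
split; last first.
  move=> [N HN]; exists N => m hm; apply: HN.
  have E : a ^+ m = a ^+ (m - N) * a ^+ N by rewrite -exprD subnK.
  have E' : a ^+ m = a ^+ N * a ^+ (m - N) by rewrite -exprD subnKC.
  case: t {Hmath} => /=.
  - by exists (a ^+ (m - N)).
  - by exists (a ^+ (m - N)).
  - by exists (a ^+ (m - N)), 0; rewrite mul0r addr0.
  - exists [:: (1, a ^+ (m - N))]; rewrite big_cons big_nil addr0 /= mul1r.
    exact: E'.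
move=> [N0 HN0].
case: Halg => p [p0 hp].
have [r [q hq Ep]] := multiplicity_XsubC p 0.
rewrite p0 /= in hq.
set R := maxn r N0.
have rR : (r <= R)%N by exact: leq_maxl.
have cop : coprimep (('X - 0%:P) ^+ R) q.
  by apply: coprimep_expl; rewrite coprimep_sym coprimep_XsubC.
have [[u v] /= Huv] := Bezout_eq1_coprimepP _ _ cop.
have hX : horner_alg a ('X - 0%:P) = a by rewrite polyC0 subr0 horner_algX.
have hXR : horner_alg a (('X - 0%:P) ^+ R) = a ^+ R by rewrite rmorphXn /= hX.
have hXq : horner_alg a (('X - 0%:P) ^+ R * q) = 0.
  have -> : ('X - 0%:P) ^+ R * q = ('X - 0%:P) ^+ (R - r) * p.
    by rewrite Ep mulrA mulrAC -exprD subnK.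
  by rewrite rmorphM /= hp mulr0.
set e := horner_alg a (u * ('X - 0%:P) ^+ R).
set f := horner_alg a (v * q).
have ef1 : e + f = 1 by rewrite /e /f -rmorphD Huv rmorph1.
have aRf : a ^+ R * f = 0.
  by rewrite -hXR /f -rmorphM mulrCA rmorphM /= hXq mulr0.
have aRe : a ^+ R * e = a ^+ R.
  by rewrite -[RHS]mulr1 -ef1 mulrDr aRf addr0.
have eaR : e * a ^+ R = a ^+ R.
  by rewrite -hXR /e -rmorphM mulrC rmorphM /= hXR; exact: aRe.
have ee : e * e = e.
  have ef0 : e * f = 0.
    rewrite /e /f -rmorphM.
    have -> : u * ('X - 0%:P) ^+ R * (v * q) = (u * v) * (('X - 0%:P) ^+ R * q) by ring.
    by rewrite rmorphM /= hXq mulr0.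
  by rewrite -[RHS]mulr1 -ef1 mulrDr ef0 addr0.
have eX : forall m, (1 <= m)%N -> e ^+ m = e.
  by elim=> // [[|m]] IH _ //; rewrite exprS IH // ee.
have eM : e \in M.
  have -> : e = horner_alg a (u * ('X - 0%:P) ^+ R) by [].
  rewrite polyC0 subr0.
  apply: poly_memM => // j hj; apply: HN0.
  exact: leq_trans (leq_maxr r N0) hj.
have eP : all_powers_in M e by move=> m hm; rewrite eX.
have L : left_mathieu M -> forall b, b * e \in M.
  move=> HL b; have [N HN] := HL e eP b.
  by have := HN N.+1 (leqnSn N); rewrite eX.
have Rt : right_mathieu M -> forall b, e * b \in M.
  move=> HR b; have [N HN] := HR e eP b.
  by have := HN N.+1 (leqnSn N); rewrite eX.
exists R => y; case: t Hmath => /=.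
- by move=> HL [b ->]; rewrite -aRe mulrA; apply: L.
- by move=> HR [b ->]; rewrite -eaR -mulrA; apply: Rt.
- move=> [HL HR] [b [c ->]]; apply: (@addM _ _ _ HM).
    by rewrite -eaR -mulrA; apply: Rt.
  by rewrite -aRe mulrA; apply: L.
- move=> HT [s ->]; apply: (@sumM _ _ _ HM) => [[b c]] /=.
  have [N HN] := HT e eP b (a ^+ R * c).
  by have := HN N.+1 (leqnSn N); rewrite eX // mulrA -(mulrA b) eaR.
Qed.
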